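(* Let $p$ be an odd prime and let $L$ be a $\mathbb{Z}_p$-lattice of rank $k\ge4$ with $L\simeq\langle\epsilon_1,p^{e_2}\epsilon_2,p^{e_3}\epsilon_3,\dots,p^{e_k}\epsilon_k\rangle$, where $0\le e_2\le\cdots\le e_k$ and $\epsilon_i\in\mathbb{Z}_p^\times$. If $\nu_p(\langle\epsilon_1,p^{e_2}\epsilon_2,p^{e_3}\epsilon_3\rangle)=\infty$ (i.e., this ternary lattice is anisotropic), then $B(\mathbf x,\mathbf y)\in p^{\nu_p(L)-1}\mathbb{Z}_p$ for all $\mathbf x,\mathbf y\in L$ with $\mathrm{ord}_p(Q(\mathbf x))=\mathrm{ord}_p(Q(\mathbf y))=\nu_p(L)$.
   Context: $\langle a_1,\dots,a_k\rangle$ denotes the $\mathbb{Z}_p$-lattice with diagonal Gram matrix; $B$ is the bilinear form and $Q(\mathbf x)=B(\mathbf x,\mathbf x)$. For odd $p$, $SC_p=\{1,\Delta_p,p,p\Delta_p\}$ with $\Delta_p$ a non-square unit. For $L$ of rank $\ge4$ and $s\in SC_p$, let $u\ge0$ be least with $sp^{2u}=Q(\mathbf x)$ for some $\mathbf x\in L$; $\nu_{p,s}(L)=\mathrm{ord}_p(sp^{2u})$ and $\nu_p(L)=\max_{s\in SC_p}\nu_{p,s}(L)$. For an anisotropic ternary lattice $K$, $\nu_p(K)=\infty$. *)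

(* Defs.v *)
(* The ring Z_p of p-adic integers is modelled concretely as
   the inverse limit of Z/p^n Z: a p-adic integer is a coherent sequence
   f : nat -> int with f (n+1) = f n (mod p^n); f n represents x mod p^n. *)
From HB Require Import structures.
From mathcomp Require Import all_boot all_order all_algebra.
From Stdlib Require Import ClassicalEpsilon.
Set Implicit Arguments. Unset Strict Implicit. Unset Printing Implicit Defensive.
Import Order.TTheory GRing.Theory Num.Theory.
Local Open Scope ring_scope.

Definition zps := nat -> int.

Definition ppow (p n : nat) : int := Posz (expn p n).

Definition zcoh (p : nat) (f : zps) : Prop :=
  forall n : nat, (f n.+1 = f n %[mod ppow p n])%Z.

Definition zeq (p : nat) (f g : zps) : Prop :=
  forall n : nat, (f n = g n %[mod ppow p n])%Z.

Definition zcst (c : int) : zps := fun _ => c.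
Definition zadd (f g : zps) : zps := fun n => f n + g n.
Definition zmul (f g : zps) : zps := fun n => f n * g n.

(* x \in p^m Z_p *)
Definition zin_pow (p : nat) (f : zps) (m : nat) : Prop :=
  (f m = 0 %[mod ppow p m])%Z.

Definition zord_eq (p : nat) (f : zps) (m : nat) : Prop :=
  zin_pow p f m /\ ~ zin_pow p f m.+1.

Definition zunit (p : nat) (f : zps) : Prop := ~ zin_pow p f 1.

Definition zsquare (p : nat) (f : zps) : Prop :=
  exists t : zps, zcoh p t /\ zeq p f (zmul t t).

Definition zvec (p m : nat) (x : nat -> zps) : Prop :=
  forall i : nat, (i < m)%N -> zcoh p (x i).

Definition Bdiag (m : nat) (a : nat -> zps) (x y : nat -> zps) : zps :=
  fun n => \sum_(i < m) a i n * x i n * y i n.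
Definition Qdiag (m : nat) (a : nat -> zps) (x : nat -> zps) : zps :=
  Bdiag m a x x.

Definition represents (p m : nat) (a : nat -> zps) (c : zps) : Prop :=
  exists x, zvec p m x /\ zeq p (Qdiag m a x) c.

(* s = d * p^t with d in {1, Delta}, t in {0,1}; u = least u with
   s p^(2u) represented; nu_{p,s} = ord_p(s p^(2u)) = t + 2u. *)
Definition least_rep_u (p m : nat) (a : nat -> zps) (d : zps) (t : nat) : nat :=
  epsilon (inhabits 0%N)
    (fun u => represents p m a (zmul d (zcst (ppow p (t + 2 * u))))
      /\ forall v, represents p m a (zmul d (zcst (ppow p (t + 2 * v)))) ->
                   (u <= v)%N).

Definition nu_s (p m : nat) (a : nat -> zps) (d : zps) (t : nat) : nat :=
  (t + 2 * least_rep_u p m a d t)%N.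

(* nu_p(L) = max over SC_p = {1, Delta, p, p Delta} *)
Definition nu_p (p m : nat) (a : nat -> zps) (Delta : zps) : nat :=
  maxn (maxn (nu_s p m a (zcst 1) 0) (nu_s p m a Delta 0))
       (maxn (nu_s p m a (zcst 1) 1) (nu_s p m a Delta 1)).

Definition anisotropic (p m : nat) (a : nat -> zps) : Prop :=
  forall x, zvec p m x -> zeq p (Qdiag m a x) (zcst 0) ->
    forall i, (i < m)%N -> zeq p (x i) (zcst 0).

Definition diag_coef (p : nat) (e : nat -> nat) (eps : nat -> zps) : nat -> zps :=
  fun i => zmul (zcst (ppow p (e i))) (eps i).

(* Main.v *)
Require Import Defs.
From HB Require Import structures.
From mathcomp Require Import all_boot all_order all_algebra.
From mathcomp Require Import ring lra zify.
From Stdlib Require Import Classical ClassicalEpsilon.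
Set Implicit Arguments. Unset Strict Implicit. Unset Printing Implicit Defensive.
Import Order.TTheory GRing.Theory Num.Theory.
Local Open Scope ring_scope.



Lemma ppE p n : ppow p n = (p%:Z) ^+ n.
Proof. elim: n => [|n IH] //; by rewrite /ppow expnS PoszM exprS -IH. Qed.

Lemma pp_dvd p j n : (j <= n)%N -> (ppow p j %| ppow p n)%Z.
Proof. by move=> h; rewrite !ppE dvdz_exp2l. Qed.

Lemma pp_add p j n : ppow p (j + n) = ppow p j * ppow p n.
Proof. by rewrite !ppE exprD. Qed.

Lemma coh_dvd p f n : zcoh p f -> (ppow p n %| f n.+1 - f n)%Z.
Proof. by move=> h; rewrite -eqz_mod_dvd; apply/eqP; apply: h. Qed.

Lemma coh_le p f n j : zcoh p f -> (ppow p n %| f (n + j)%N - f n)%Z.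
Proof.
move=> h; elim: j => [|j IH]; first by rewrite addn0 subrr dvdz0.
have ->: f (n + j.+1)%N - f n = (f (n+j).+1 - f (n + j)%N) + (f (n+j)%N - f n).
  by rewrite addnS; ring.
rewrite rpredD //; apply: dvdz_trans (coh_dvd (n + j) h).
by apply: pp_dvd; rewrite leq_addr.
Qed.

Lemma coh_le' p f n m : zcoh p f -> (n <= m)%N -> (ppow p n %| f m - f n)%Z.
Proof. by move=> h /subnKC <-; apply: coh_le. Qed.

Lemma cohM p f g : zcoh p f -> zcoh p g -> zcoh p (zmul f g).
Proof.
move=> hf hg n; rewrite /zcoh; apply/eqP; rewrite eqz_mod_dvd /zmul.
have ->: f n.+1 * g n.+1 - f n * g n = f n.+1 * (g n.+1 - g n) + (f n.+1 - f n) * g n by ring.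
by apply: rpredD; [apply: dvdz_mull | apply: dvdz_mulr]; apply: coh_dvd.
Qed.

Lemma cohD p f g : zcoh p f -> zcoh p g -> zcoh p (zadd f g).
Proof.
move=> hf hg n; rewrite /zcoh; apply/eqP; rewrite eqz_mod_dvd /zadd.
have ->: f n.+1 + g n.+1 - (f n + g n) = (f n.+1 - f n) + (g n.+1 - g n) by ring.
by apply: rpredD; apply: coh_dvd.
Qed.

Lemma cohC p c : zcoh p (zcst c).
Proof. by move=> n. Qed.

Lemma cohB p m a x y : (forall i, (i < m)%N -> zcoh p (a i) /\ zcoh p (x i) /\ zcoh p (y i)) ->
  zcoh p (Bdiag m a x y).
Proof.
move=> h n; apply/eqP; rewrite eqz_mod_dvd /Bdiag -sumrB rpred_sum // => i _.
have [ha [hx hy]] := h i (ltn_ord i).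
have := cohM (cohM ha hx) hy n; rewrite /zmul => /eqP; by rewrite eqz_mod_dvd.
Qed.



Section Hensel.
Variables (p b : nat) (QX BXY QY N : zps).
Definition Estep (L : nat) (w : int) : int := QX L - N L + 2 * w * BXY L + w * w * QY L.
Fixpoint Wseq (k : nat) : int :=
  match k with
  | 0 => 0
  | k'.+1 => let L := (k' + b).+1 in let w := Wseq k' in
     let e := (Estep L w %/ ppow p (k' + b))%Z in
     let u := (BXY L %/ ppow p b)%Z in
     let c := (egcdz (2 * u) p).1 in
     w - ppow p k' * (e * c)
  end.

Hypotheses (pP : prime p) (po : odd p) (cQX : zcoh p QX) (cB : zcoh p BXY) (cQY : zcoh p QY)
  (cN : zcoh p N) (hQXb : (ppow p b %| QX b)%Z) (hNb : (ppow p b %| N b)%Z)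
  (hBb : (ppow p b %| BXY b)%Z) (hQY : forall n, (b < n)%N -> (ppow p b.+1 %| QY n)%Z)
  (hBb1 : ~~ (ppow p b.+1 %| BXY b.+1)%Z).

Lemma Estep_shift L m w : (m <= L)%N -> (ppow p m %| Estep L w - Estep m w)%Z.
Proof.
move=> hmL; rewrite /Estep.
have ->: QX L - N L + 2 * w * BXY L + w * w * QY L - (QX m - N m + 2 * w * BXY m + w * w * QY m)
  = (QX L - QX m) - (N L - N m) + 2 * w * (BXY L - BXY m) + w * w * (QY L - QY m) by ring.
by apply: rpredD; [apply: rpredD; [apply: rpredB|] | ]; try apply: dvdz_mull; apply: coh_le'.
Qed.

Lemma W_inv k : (ppow p (k + b) %| Estep (k + b) (Wseq k))%Z.
Proof.
elim: k => [|k IH].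
  rewrite add0n /= /Estep.
  have ->: QX b - N b + 2 * 0 * BXY b + 0 * 0 * QY b = QX b - N b by ring.
  by apply: rpredB.
rewrite [Wseq _]/=.
set L := (k + b).+1.
have hL : (k.+1 + b)%N = L by rewrite addSn.
rewrite hL.
have h1 : (ppow p (k + b) %| Estep L (Wseq k))%Z.
  have ->: Estep L (Wseq k) = (Estep L (Wseq k) - Estep (k + b) (Wseq k)) + Estep (k + b) (Wseq k) by ring.
  by apply: rpredD => //; apply: Estep_shift; rewrite /L.
have hB : (ppow p b %| BXY L)%Z.
  have ->: BXY L = (BXY L - BXY b) + BXY b by ring.
  by apply: rpredD => //; apply: (coh_le' cB); exact: (leq_trans (leq_addl k b) (leqnSn _)).
have hu := divzK hB.
have hnu : ~~ ((p:int) %| (BXY L %/ ppow p b))%Z.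
  apply: contra hBb1 => hpu.
  have hB1 : (ppow p b.+1 %| BXY L)%Z.
    rewrite -hu; have ->: ppow p b.+1 = (p:int) * ppow p b by rewrite !ppE exprS.
    by apply: dvdz_mul => //; apply: dvdzz.
  have ->: BXY b.+1 = BXY L - (BXY L - BXY b.+1) by ring.
  by apply: rpredB => //; apply: (coh_le' cB); rewrite /L ltnS; apply: leq_addl.
have hcop : coprimez (2 * (BXY L %/ ppow p b)%Z) p.
  rewrite coprimezE abszM coprimeMl; apply/andP; split.
    rewrite /= coprime_sym prime_coprime //; apply/negP => /dvdn_leq h.
    have h2 := h isT; have h3 := prime_gt1 pP; have e2 : p = 2%N by apply/eqP; rewrite eqn_leq h2 h3.
    by move: po; rewrite e2.
  by rewrite coprime_sym prime_coprime //; move: hnu; rewrite dvdzE.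
case: (egcdzP (2 * (BXY L %/ ppow p b)%Z) p) hcop => c v bez _ hcop.
move/eqP: hcop => hcop; rewrite hcop in bez.
rewrite [(_, _).1]/=.
move: (BXY L %/ ppow p b)%Z hu bez hnu => u hu bez _.
have he := divzK h1.
move: (Estep L (Wseq k) %/ ppow p (k + b))%Z he => e he.
have hQ : (ppow p b.+1 %| QY L)%Z by apply: hQY; rewrite /L ltnS; apply: leq_addl.
have hq := divzK hQ.
move: (QY L %/ ppow p b.+1)%Z hq => q hq.
move: (Wseq k) he => w he.
have hLk : L = (k + b).+1 by [].
move: he hu hq; rewrite /Estep hLk !ppE exprSr exprD.
set X := (p%:Z) ^+ k; set Y := (p%:Z) ^+ b; set P := p%:Z.
move=> he hu hq.
have hE : QX (k + b).+1 = e * (X * Y) + N (k + b).+1 - 2 * w * BXY (k + b).+1 - w * w * QY (k + b).+1.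
  by rewrite he; ring.
rewrite hE -hu -hq.
have ->: e * (X * Y) + N (k + b).+1 - 2 * w * (u * Y) - w * w * (q * (Y * P)) - N (k + b).+1 +
  2 * (w - X * (e * c)) * (u * Y) + (w - X * (e * c)) * (w - X * (e * c)) * (q * (Y * P))
  = X * Y * P * (e * v + (- (2 * w * e * c) + X * e * e * c * c) * q) + X * Y * e * (1 - (c * (2 * u) + v * P))
  by ring.
rewrite /X /Y /P bez subrr mulr0 addr0 exprSr exprD.
by apply: dvdz_mulr; apply: dvdzz.
Qed.

Lemma hensel_main : exists w : zps, zcoh p w /\
  forall n, (ppow p n %| QX n + 2 * w n * BXY n + w n * w n * QY n - N n)%Z.
Proof.
exists Wseq; split.
  move=> n; apply/eqP; rewrite eqz_mod_dvd /= addrAC subrr add0r rpredN.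
  by apply: dvdz_mulr; apply: dvdzz.
move=> n.
have ->: QX n + 2 * Wseq n * BXY n + Wseq n * Wseq n * QY n - N n = Estep n (Wseq n) by rewrite /Estep; ring.
have ->: Estep n (Wseq n) = Estep (n + b) (Wseq n) - (Estep (n + b) (Wseq n) - Estep n (Wseq n)) by ring.
apply: rpredB; last by apply: Estep_shift; rewrite leq_addr.
by apply: dvdz_trans (W_inv n); apply: pp_dvd; rewrite leq_addr.
Qed.

End Hensel.



Lemma ex_least (P : nat -> Prop) n : P n -> exists u, P u /\ forall v, P v -> (u <= v)%N.
Proof.
elim: n {-2}n (leqnn n) => [|n IH] m hm Pm.
  by exists m; split => // v _; move: hm; rewrite leqn0 => /eqP ->.
case: (classic (exists v, P v /\ (v < m)%N)) => [[v [Pv hv]]|hno].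
  by apply: (IH v) => //; rewrite -ltnS (leq_trans hv hm).
exists m; split => // v Pv; rewrite leqNgt; apply/negP => hv; apply: hno; by exists v.
Qed.

Lemma nu_s_le p m a d t u :
  represents p m a (zmul d (zcst (ppow p (t + 2 * u)%N))) -> (nu_s p m a d t <= t + 2 * u)%N.
Proof.
move=> hr.
have [u0 [h0 hmin]] := @ex_least (fun v => represents p m a (zmul d (zcst (ppow p (t + 2 * v)%N)))) u hr.
have := @epsilon_spec nat (inhabits 0%N) (fun u => represents p m a
     (zmul d (zcst (ppow p (t + 2 * u)%N))) /\ (forall v : nat,
    represents p m a (zmul d (zcst (ppow p (t + 2 * v)%N))) -> (u <= v)%N)).
move=> /(_ (ex_intro _ u0 (conj h0 hmin))) [_ /(_ u hr)] hle.
by rewrite /nu_s /least_rep_u leq_add2l leq_mul2l hle orbT.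
Qed.

Lemma coh_div p f N j n : zcoh p f -> (ppow p N %| f N)%Z -> (j <= N)%N -> (j <= n)%N ->
  (ppow p j %| f n)%Z.
Proof.
move=> hf hN hjN hjn.
case: (leqP n N) => hnN.
  have ->: f n = f N - (f N - f n) by ring.
  apply: rpredB; first by apply: dvdz_trans hN; apply: pp_dvd.
  by apply: dvdz_trans (coh_le' hf hnN); apply: pp_dvd.
have ->: f n = (f n - f N) + f N by ring.
apply: rpredD; last by apply: dvdz_trans hN; apply: pp_dvd.
by apply: dvdz_trans (coh_le' hf (ltnW hnN)); apply: pp_dvd.
Qed.

Lemma Qexpand m (a x y : nat -> zps) (w : zps) n :
  Qdiag m a (fun i => zadd (x i) (zmul w (y i))) n =
  Qdiag m a x n + 2 * w n * Bdiag m a x y n + w n * w n * Qdiag m a y n.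
Proof.
rewrite /Qdiag /Bdiag /zadd /zmul !mulr_sumr -!big_split /=.
by apply: eq_bigr => i _; ring.
Qed.

Lemma hu_lemma b t : (t <= 1)%N -> (b <= t + 2 * ((b.+1 - t)./2) <= b.+1)%N.
Proof.
move=> ht; have := odd_double_half (b.+1 - t); rewrite -muln2.
case: (odd _) => /= h; apply/andP; split; lia.
Qed.



Lemma main_aux (p k : nat) (a : nat -> zps) (Delta : zps) (x y : nat -> zps) :
  prime p -> odd p ->
  (forall i, (i < k)%N -> zcoh p (a i)) -> zcoh p Delta ->
  zvec p k x -> zvec p k y ->
  zin_pow p (Qdiag k a x) (nu_p p k a Delta) ->
  zin_pow p (Qdiag k a y) (nu_p p k a Delta) ->
  zin_pow p (Bdiag k a x y) (nu_p p k a Delta).-1.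
Proof.
move=> pP po ha hD hx hy hQx hQy.
set nu := nu_p p k a Delta.
set Bxy := Bdiag k a x y.
have cB : zcoh p Bxy by apply: cohB => i hi; split; [exact: ha | split; [exact: hx | exact: hy]].
have cQx : zcoh p (Qdiag k a x) by apply: cohB => i hi; split; [exact: ha | split; exact: hx].
have cQy : zcoh p (Qdiag k a y) by apply: cohB => i hi; split; [exact: ha | split; exact: hy].
rewrite /zin_pow; apply/eqP; rewrite eqz_mod_dvd subr0.
case: (boolP (ppow p nu.-1 %| Bxy nu.-1)%Z) => // hnot; exfalso.
have hex : exists m, ~~ (ppow p m %| Bxy m)%Z by exists nu.-1.
case: (ex_minnP hex) => b' hb' hmin.
case: b' hb' hmin => [|b] hb' hmin.
  by move: hb'; rewrite /ppow expn0 dvd1z.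
have hBb : (ppow p b %| Bxy b)%Z.
  by apply/negPn/negP => hb; have := hmin b hb; rewrite ltnn.
have hbnu : (b.+1 <= nu.-1)%N by apply: hmin.
have hQx' : (ppow p nu %| Qdiag k a x nu)%Z by move/eqP: hQx; rewrite eqz_mod_dvd subr0.
have hQy' : (ppow p nu %| Qdiag k a y nu)%Z by move/eqP: hQy; rewrite eqz_mod_dvd subr0.
have hbnu2 : (b.+2 <= nu)%N by move: hbnu; case: (nu) => [|n] //=.
have bound : forall d t, zcoh p d -> (t <= 1)%N -> (nu_s p k a d t <= b.+1)%N.
  move=> d t hd ht.
  set u := ((b.+1 - t)./2)%N.
  have hu : (b <= t + 2 * u <= b.+1)%N by apply: hu_lemma.
  case/andP: hu => hu1 hu2.
  apply: leq_trans hu2; apply: nu_s_le.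
  set m := (t + 2 * u)%N.
  have HQX : (ppow p b %| Qdiag k a x b)%Z.
    apply: (coh_div cQx hQx') => //; apply: leq_trans (ltnW (ltnW hbnu2)); exact: leqnn.
  have HN : (ppow p b %| zmul d (zcst (ppow p m)) b)%Z.
    by rewrite /zmul /zcst; apply: dvdz_mull; apply: pp_dvd.
  have HQY : forall n, (b < n)%N -> (ppow p b.+1 %| Qdiag k a y n)%Z.
    by move=> n hn; apply: (coh_div cQy hQy') => //; apply: ltnW.
  have [w [cw hw]] := @hensel_main p b (Qdiag k a x) Bxy (Qdiag k a y) (zmul d (zcst (ppow p m))) pP po cQx cB cQy
    (cohM hd (cohC _ _)) HQX HN hBb HQY hb'.
  exists (fun i => zadd (x i) (zmul w (y i))); split.
    by move=> i hi; apply: cohD; [exact: hx | apply: cohM => //; exact: hy].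
  move=> n; apply/eqP; rewrite eqz_mod_dvd Qexpand; exact: hw.
have : (nu <= b.+1)%N.
  rewrite /nu /nu_p !geq_max !bound //; try exact: cohC.
by move=> h; move: (leq_trans hbnu2 h); rewrite ltnn.
Qed.

Local Close Scope ring_scope.

Theorem lemma2p8 (p k : nat) (e : nat -> nat) (eps : nat -> zps) (Delta : zps) :
  prime p -> odd p -> (4 <= k)%N ->
  (forall i, (i < k)%N -> zcoh p (eps i) /\ zunit p (eps i)) ->
  e 0%N = 0%N ->
  (forall i j, (i <= j < k)%N -> (e i <= e j)%N) ->
  zcoh p Delta -> zunit p Delta -> ~ zsquare p Delta ->
  anisotropic p 3 (diag_coef p e eps) ->
  forall x y : nat -> zps, zvec p k x -> zvec p k y ->
    zord_eq p (Qdiag k (diag_coef p e eps) x) (nu_p p k (diag_coef p e eps) Delta) ->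
    zord_eq p (Qdiag k (diag_coef p e eps) y) (nu_p p k (diag_coef p e eps) Delta) ->
    zin_pow p (Bdiag k (diag_coef p e eps) x y) (nu_p p k (diag_coef p e eps) Delta).-1.
Proof.
move=> pP po _ heps _ _ hD _ _ _ x y hx hy [hQx _] [hQy _].
apply: main_aux => //.
move=> i hi; apply: cohM; first exact: cohC.
by have [] := heps i hi.
Qed.
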